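(* Let $p$ be any prime, and let $n$, $m$, $s$ and $r$ be nonnegative integers such that $n\ge m$, $s\ge 1$, $1\le r\le p^s-1$ and $r$ is not divisible by $p$. Then \[ \binom{np^s}{mp^s+r}\equiv (-1)^{r-1}\, r^{-1}\,(m+1)\binom{n}{m+1}\,p^s \pmod{p^{s+1}}, \] where $r^{-1}$ denotes any integer $r'$ with $rr'\equiv 1 \pmod p$ (the inverse of $r$ modulo $p$).
   Context: Binomial coefficients follow the convention $\binom{l}{t}=0$ if $l<t$ and $\binom{0}{0}=1$. Since the right-hand side carries the factor $p^s$, the congruence modulo $p^{s+1}$ does not depend on the choice of the integer representative of $r^{-1}$ modulo $p$. *)

(* Defs.v *)
From mathcomp Require Import all_boot all_algebra.

(* Main.v *)
Require Import Defs.
From mathcomp Require Import all_boot all_algebra.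
From mathcomp Require Import zify ring lra.
Import GRing.Theory Num.Theory.
Local Open Scope ring_scope.

Lemma coefX1n (R : nzRingType) n i : ((('X + 1) ^+ n : {poly R})`_i) = ('C(n, i))%:R.
Proof.
rewrite exprD1n coef_sum.
under eq_bigr do rewrite coefMn coefXn.
case: (ltnP i n.+1) => Hi.
  rewrite (bigD1 (Ordinal Hi)) //= eqxx mulr1n big1 ?addr0 //.
  move=> j Hj; have ->: (i == j) = false.
    by apply/negbTE; apply: contraNneq Hj => E; apply/eqP; apply: val_inj; rewrite /= E.
  by rewrite mul0rn.
rewrite bin_small // big1 // => j _.
have ->: (i == j) = false by apply/negbTE; apply/eqP => E; move: (ltn_ord j); rewrite -E; lia.
by rewrite mul0rn.
Qed.

Section Fp.
Variable p : nat.
Hypothesis pp : prime p.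

Lemma pchar_polyFp : p \in [pchar {poly 'F_p}].
Proof. by rewrite pchar_poly; exact: pchar_Fp. Qed.

Lemma frobX s : (('X + 1) ^+ (p ^ s) : {poly 'F_p}) = 'X^(p ^ s) + 1.
Proof.
rewrite exprDn_pchar ?expr1n //.
rewrite (eq_pnat _ (pcharf_eq pchar_polyFp)).
by rewrite pnatX pnat_id.
Qed.

Lemma binq_dvd s j : (0 < j < p ^ s)%N -> ('C(p ^ s, j))%:R = 0 :> 'F_p.
Proof.
move=> /andP [H1 H2].
have := congr1 (fun P : {poly 'F_p} => P`_j) (frobX s).
rewrite /= coefX1n coefD coefXn coefC.
have ->: (j == p ^ s)%N = false by apply/negbTE; rewrite neq_ltn H2.
have ->: (j == 0%N) = false by lia.
by rewrite addr0 => ->.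
Qed.

Lemma binqm1 s d : (d < p ^ s)%N -> ('C((p ^ s).-1, d))%:R = (-1) ^+ d :> 'F_p.
Proof.
have q0 : (0 < p ^ s)%N by rewrite expn_gt0 prime_gt0.
elim: d => [|d IH] Hd; first by rewrite bin0 expr0.
have := binq_dvd s d.+1; rewrite Hd /= => /(_ isT).
have E : (p ^ s = (p ^ s).-1.+1)%N by rewrite prednK.
rewrite {1}E binS natrD IH; last by lia.
move/eqP; rewrite addr_eq0 => /eqP ->.
by rewrite exprS mulN1r.
Qed.

Lemma lucas s n m d : (d < p ^ s)%N -> (0 < n)%N ->
  ('C(n * p ^ s - 1, m * p ^ s + d))%:R = ('C(n.-1, m))%:R * (-1) ^+ d :> 'F_p.
Proof.
move=> Hd Hn.
have q0 : (0 < p ^ s)%N by rewrite expn_gt0 prime_gt0.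
set q := (p ^ s)%N in Hd q0 *.
have E : (n * q - 1 = (n.-1) * q + q.-1)%N.
  by case: n Hn => // n _; rewrite /= mulSn; lia.
have <- := coefX1n 'F_p (n * q - 1) (m * q + d).
rewrite E exprD mulnC exprM frobX exprD1n mulr_suml coef_sum.
rewrite -/q.
under eq_bigr do rewrite mulrnAl coefMn -exprM coefXnM coefX1n.
rewrite (eq_bigr (fun j : 'I_(n.-1).+1 => if (j == m :> nat) then ('C(q.-1, d))%:R *+ 'C(n.-1, j) else 0)).
  rewrite -big_mkcond /= (big_ord1_eq _ (fun j : nat => 'C(q.-1, d)%:R *+ 'C(n.-1, j))) binqm1 //.
  case: ltnP => Hm; first by rewrite mulr_natl.
  by rewrite bin_small ?mul0r // ltnS.
move=> j _.
case: eqP => [->|Hj]; first by rewrite ltnNge mulnC leq_addr /= addnC addnK.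
case: ltnP => H; first by rewrite mul0rn.
rewrite bin_small ?mul0rn //.
have Hjm : (j < m)%N.
  rewrite ltnNge; apply/negP => Hmj.
  have : (m < j)%N by rewrite ltn_neqAle Hmj andbT; apply/eqP => E'; apply: Hj; rewrite E'.
  move=> Hmj'; move: H; rewrite mulnC.
  have : (m.+1 * q <= j * q)%N by rewrite leq_mul2r Hmj' orbT.
  rewrite mulSn; lia.
have : (j.+1 * q <= m * q)%N by rewrite leq_mul2r Hjm orbT.
rewrite mulSn mulnC; lia.
Qed.
End Fp.

Lemma tA (p m s r : nat) (r' : int) : (1 <= r)%N -> (m <= 0)%N ->
  (('C(0 * p ^ s, m * p ^ s + r))%:Z
     = (-1) ^+ (r - 1) * r' * (m.+1)%:Z * ('C(0, m.+1))%:Z * (p ^ s)%:Z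
     %[mod (p ^ s.+1)%:Z])%Z.
Proof.
move=> Hr Hmn.
  have -> : m = 0%N by lia.
  by rewrite !mul0n add0n !bin_small // -[Posz 0]/(0 : int) mulr0 mul0r.
Qed.

Lemma tB (p n m a : nat) (k : nat) : prime p ->
  (a%:R : 'F_p) = ('C(n.+1.-1, m))%:R * (-1) ^+ k ->
  (p%:Z %| a%:Z - 'C(n, m)%:Z * (-1) ^+ k)%Z.
Proof.
move=> pp hL.
  rewrite (dvdz_pcharf (pchar_Fp pp)) rmorphB /= rmorphM /= rmorphXn /= rmorphN1 /=.
  rewrite subr_eq0; apply/eqP. exact: hL.
Qed.

Lemma tC (p m n1 : nat) (Q' Y : nat) (r : nat) (r' t u sg : int) (K D c1 c2 : nat) :
 (r%:Z * r' - 1 - u * p%:Z = 0) ->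
 ((m%:Z * (p%:Z * Q'%:Z) + r%:Z) * Y%:Z - n1%:Z * D%:Z = 0) ->
 (D%:Z - c1%:Z * sg - t * p%:Z = 0) ->
 (n1%:Z * c1%:Z - (m.+1)%:Z * c2%:Z = 0) ->
 Y%:Z * (p%:Z * Q'%:Z) - sg * r' * (m.+1)%:Z * c2%:Z * (p%:Z * Q'%:Z) -
  (r' * n1%:Z * t - r' * m%:Z * Q'%:Z * Y%:Z - u * Y%:Z) * (p%:Z * (p%:Z * Q'%:Z)) = 0.
Proof.
move=> e1 e2 e3 e4.
transitivity ((p%:Z * Q'%:Z) * (- Y%:Z * (r%:Z * r' - 1 - u * p%:Z)
   + r' * ((m%:Z * (p%:Z * Q'%:Z) + r%:Z) * Y%:Z - n1%:Z * D%:Z)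
   + r' * n1%:Z * (D%:Z - c1%:Z * sg - t * p%:Z)
   + sg * r' * (n1%:Z * c1%:Z - (m.+1)%:Z * c2%:Z))).
  ring.
by rewrite e1 e2 e3 e4; ring.
Qed.

Lemma tD (p n m s r : nat) :
  prime p -> (1 <= s)%N -> (1 <= r)%N -> (r <= p ^ s - 1)%N ->
  ~~ (p %| r)%N -> exists Y : nat,
  'C(n.+1 * p ^ s, m * p ^ s + r) = (Y * p ^ s)%N /\
  ((m * p ^ s + r) * Y = n.+1 * 'C(n.+1 * p ^ s - 1, m * p ^ s + (r - 1)))%N.
Proof.
move=> pp Hs Hr Hrq Hpr.
have q0 : (0 < p ^ s)%N by rewrite expn_gt0 prime_gt0.
set n1 := n.+1.
have Eq : (p ^ s = p * p ^ s.-1)%N by rewrite -expnS prednK.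
set q := (p ^ s)%N in q0 Hrq Eq *.
set Q' := (p ^ s.-1)%N in Eq.
set K := (m * q + r)%N.
set C := 'C(n1 * q, K).
set D := 'C(n1 * q - 1, m * q + (r - 1)).
have hKC : (n1 * q * D = K * C)%N.
  rewrite /D subn1 mul_bin_diag /K /C; have -> : ((m * q + (r - 1)).+1 = m * q + r)%N by lia. by [].
have cop : coprime q K.
  rewrite /q coprime_pexpl; last by lia.
  rewrite prime_coprime // /K dvdn_addr //.
  by rewrite Eq mulnCA dvdn_mulr.
have : (q %| K * C)%N by rewrite -hKC -mulnA mulnCA dvdn_mulr.
rewrite Gauss_dvdr // => /dvdnP [Y hY].
exists Y; split => //.
  apply/eqP; rewrite -(eqn_pmul2r q0) -mulnA -hY -hKC; apply/eqP; ring.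
Qed.

Theorem theorem1p1 (p n m s r : nat) (r' : int) :
  prime p -> (m <= n)%N -> (1 <= s)%N -> (1 <= r)%N -> (r <= p ^ s - 1)%N ->
  ~~ (p %| r)%N ->
  ((r%:Z * r') = 1 %[mod p%:Z])%Z ->
  (('C(n * p ^ s, m * p ^ s + r))%:Z
     = (-1) ^+ (r - 1) * r' * (m.+1)%:Z * ('C(n, m.+1))%:Z * (p ^ s)%:Z
     %[mod (p ^ s.+1)%:Z])%Z.
Proof.
move=> pp Hmn Hs Hr Hrq Hpr Hinv.
case: n Hmn => [|n] Hmn; first exact: tA.
have [Y [hY hKY]] := @tD p n m s r pp Hs Hr Hrq Hpr.
have Hd : (r - 1 < p ^ s)%N by clear -Hrq Hr; lia.
have hL := @lucas p pp s n.+1 m (r - 1) Hd (ltn0Sn n).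
move/dvdzP: (@tB p n m _ _ pp hL) => [t ht].
move/eqP: Hinv; rewrite eqz_mod_dvd => /dvdzP [u hu].
set D := 'C(n.+1 * p ^ s - 1, m * p ^ s + (r - 1)) in hKY ht.
have Eq : (p ^ s = p * p ^ s.-1)%N by rewrite -expnS prednK.
have hKYz := congr1 Posz hKY; rewrite !PoszM PoszD PoszM Eq PoszM /= in hKYz.
have hnz := congr1 Posz (mul_bin_diag n.+1 m); rewrite !PoszM /= in hnz.
apply/eqP; rewrite eqz_mod_dvd; apply/dvdzP.
exists (r' * n.+1%:Z * t - r' * m%:Z * (p ^ s.-1)%:Z * Y%:Z - u * Y%:Z).
rewrite hY expnS Eq !PoszM.
apply/eqP; rewrite -subr_eq0; apply/eqP.
apply: (@tC p m n.+1 (p ^ s.-1) Y r r' t u ((-1) ^+ (r - 1)) 0 ('C(n.+1 * p ^ s - 1, m * p ^ s + (r - 1))) ('C(n, m)) ('C(n.+1, m.+1))).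
- by rewrite hu subrr.
- by rewrite hKYz subrr.
- by rewrite ht subrr.
- by rewrite hnz subrr.
Qed.
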